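(* Let $\mathcal{X}$ be a countable set and $\mathcal{D}$ a distribution on $\mathcal{X}\times\{0,1\}$. Fix any two models $f_1,f_2:\mathcal{X}\to[0,1]$ and any $\epsilon>0$. If $\mu(U_\epsilon(f_1,f_2))=\alpha$, then for some $\bullet\in\{>,<\}$ and some $i\in\{1,2\}$, $$\mu(U^\bullet_\epsilon(f_1,f_2))\cdot\big(v_*^\bullet-v_i^\bullet\big)^2\ge\frac{\alpha\epsilon^2}{8},$$ where $v_*^\bullet=\mathbb{E}_{(x,y)\sim\mathcal{D}}[y\mid x\in U^\bullet_\epsilon(f_1,f_2)]$ and $v_i^\bullet=\mathbb{E}_{(x,y)\sim\mathcal{D}}[f_i(x)\mid x\in U^\bullet_\epsilon(f_1,f_2)]$.
   Context: For a set $S\subseteq\mathcal{X}$, $\mu(S)=\Pr_{(x,y)\sim\mathcal{D}}[x\in S]$. $U_\epsilon(f_1,f_2)=\{x:|f_1(x)-f_2(x)|>\epsilon\}$, $U^>_\epsilon(f_1,f_2)=\{x\in U_\epsilon(f_1,f_2):f_1(x)>f_2(x)\}$, $U^<_\epsilon(f_1,f_2)=\{x\in U_\epsilon(f_1,f_2):f_1(x)<f_2(x)\}$. When a set has mass zero the product $\mu(\cdot)\cdot(\cdot)^2$ is taken to be $0$. *)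

(* Defs.v *)
From HB Require Import structures.
From mathcomp Require Import all_boot all_order all_algebra.
From mathcomp Require Import all_classical all_reals all_analysis.
Set Implicit Arguments. Unset Strict Implicit. Unset Printing Implicit Defensive.
Import Order.TTheory GRing.Theory Num.Theory.
Local Open Scope classical_set_scope.
Local Open Scope ring_scope.

(* A distribution D on X * {0,1} over a countable X is given by its
   probability mass function pmf : X * bool -> R (label y = true means 1). *)
Definition is_distribution (R : realType) (X : countType) (pmf : X * bool -> R) : Prop :=
  (forall z, 0 <= pmf z) /\ (\esum_(z in [set: X * bool]) (pmf z)%:E = 1%E).

Definition mu (R : realType) (X : countType) (pmf : X * bool -> R) (S : set X) : R :=
  fine (\esum_(z in [set z : X * bool | S z.1]) (pmf z)%:E).

(* E_{(x,y)~D}[ g(x,y) | x \in S ]  (for nonnegative bounded g) *)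
Definition condE (R : realType) (X : countType) (pmf : X * bool -> R) (S : set X)
  (g : X * bool -> R) : R :=
  fine (\esum_(z in [set z : X * bool | S z.1]) (g z * pmf z)%:E) / mu pmf S.

Definition Ueps (R : realType) (X : Type) (eps : R) (f1 f2 : X -> R) : set X :=
  [set x | eps < `|f1 x - f2 x|].
Definition Ugt (R : realType) (X : Type) (eps : R) (f1 f2 : X -> R) : set X :=
  [set x | Ueps eps f1 f2 x /\ f1 x > f2 x].
Definition Ult (R : realType) (X : Type) (eps : R) (f1 f2 : X -> R) : set X :=
  [set x | Ueps eps f1 f2 x /\ f1 x < f2 x].

Definition gap_term (R : realType) (X : countType) (pmf : X * bool -> R) (S : set X)
  (f : X -> R) : R :=
  if mu pmf S == 0 then 0
  else mu pmf S * (condE pmf S (fun z => (z.2)%:R) - condE pmf S (fun z => f z.1)) ^+ 2.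

(* Main.v *)
Require Import Defs.
From HB Require Import structures.
From mathcomp Require Import all_boot all_order all_algebra.
From mathcomp Require Import all_classical all_reals all_analysis.
From mathcomp Require Import ring lra.
Import Order.TTheory GRing.Theory Num.Theory.
Local Open Scope classical_set_scope.
Local Open Scope ring_scope.

Lemma core (R : realType) (m A Bf Bg alpha eps : R) : 0 < eps -> 0 <= m ->
  alpha <= 2 * m -> Bg + eps * m <= Bf ->
  exists b, (b = Bf \/ b = Bg) /\
   alpha * eps ^+ 2 / 8 <= (if m == 0 then 0 else m * (A / m - b / m) ^+ 2).
Proof.
move=> he hm ha hb.
have [m0|mn0] := eqVneq m 0.
  exists Bf; split; first by left.
  subst m; rewrite ?eqxx.
  have : alpha <= 0 by lra.
  move=> al0; rewrite -mulrA mulr_le0_ge0 // divr_ge0 //; first exact: sqr_ge0.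
have mp : 0 < m by rewrite lt_neqAle eq_sym mn0 hm.
have key : forall b, eps * m / 2 <= `|A - b| ->
    alpha * eps ^+ 2 / 8 <= m * (A / m - b / m) ^+ 2.
  move=> b hab.
  have -> : m * (A / m - b / m) ^+ 2 = (A - b) ^+ 2 / m.
    by field.
  rewrite ler_pdivlMr //.
  have h1 : (eps * m / 2) ^+ 2 <= (A - b) ^+ 2.
    rewrite -(real_normK (num_real (A - b))).
    rewrite lerXn2r // nnegrE //.
    by rewrite divr_ge0 // mulr_ge0 // ltW.
  apply: le_trans h1.
  have e2 : 0 <= eps ^+ 2 by exact: sqr_ge0.
  have : alpha * eps ^+ 2 / 8 * m <= (2 * m) * eps ^+ 2 / 8 * m.
    rewrite ler_wpM2r // ler_wpM2r // ler_wpM2r //.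
  move=> h; apply: (le_trans h).
  by rewrite -subr_ge0 (_ : _ - _ = 0) //; field.

have em : 0 <= eps * m by rewrite mulr_ge0 // ltW.
have [hA|hA] := lerP ((Bf + Bg) / 2) A.
  exists Bg; split; first by right.
  apply: key; rewrite ger0_norm; set q := eps * m in hb em *; lra.
exists Bf; split; first by left.
apply: key; rewrite ler0_norm; set q := eps * m in hb em *; lra.
Qed.
Set Implicit Arguments.

Lemma esumZ (R : realType) (T : choiceType) (S : set T) (a : T -> \bar R) (r : R) :
  0 <= r -> (forall i, (0 <= a i)%E) ->
  (\esum_(i in S) (r%:E * a i) = r%:E * \esum_(i in S) a i)%E.
Proof.
move=> r0 a0; rewrite /esum -ereal_supZl //; last first.
  by apply/set0P; exists 0%E; exists set0; [exact: fsets_set0|rewrite fsbig_set0].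
congr ereal_sup; rewrite image_comp; apply: eq_imagel => A _ /=.
by rewrite ge0_mule_fsumr.
Qed.

Lemma esum_bnd (R : realType) (X : countType) (pmf : X * bool -> R)
  (hD : is_distribution pmf) (S : set (X * bool)) (a : X * bool -> R) :
  (forall z, 0 <= a z <= pmf z) ->
  (0 <= \esum_(z in S) (a z)%:E)%E /\ (\esum_(z in S) (a z)%:E <= 1)%E.
Proof.
case: hD => p0 p1 ha; split.
  by apply: esum_ge0 => z _; rewrite lee_fin; case/andP: (ha z).
rewrite -p1 esum_mkcond; apply: le_esum => z _.
case: ifP => _; first by rewrite lee_fin; case/andP: (ha z).
by rewrite lee_fin.
Qed.

Lemma esum_fin (R : realType) (X : countType) (pmf : X * bool -> R)
  (hD : is_distribution pmf) (S : set (X * bool)) (a : X * bool -> R) :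
  (forall z, 0 <= a z <= pmf z) ->
  \esum_(z in S) (a z)%:E \is a fin_num.
Proof.
move=> ha; have [h0 h1] := @esum_bnd _ _ _ hD S a ha.
by rewrite ge0_fin_numE // (le_lt_trans h1) // ltry.
Qed.

Lemma mu_fin (R : realType) (X : countType) (pmf : X * bool -> R)
  (hD : is_distribution pmf) (S : set X) :
  (mu pmf S)%:E = \esum_(z in [set z : X * bool | S z.1]) (pmf z)%:E.
Proof.
rewrite /mu fineK //; apply: (@esum_fin _ _ _ hD _ pmf) => z.
by rewrite lexx andbT; case: hD.
Qed.

Lemma mu_split (R : realType) (X : countType) (pmf : X * bool -> R)
  (hD : is_distribution pmf) (f1 f2 : X -> R) (eps : R) : 0 < eps ->
  mu pmf (Ueps eps f1 f2) = mu pmf (Ugt eps f1 f2) + mu pmf (Ult eps f1 f2).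
Proof.
move=> heps; apply/EFin_inj; rewrite EFinD !mu_fin //.
rewrite (esumID [set z : X * bool | Ugt eps f1 f2 z.1]); last first.
  by move=> z _; rewrite lee_fin; case: hD.
congr (_ + _)%E; congr (esum _ _); apply/seteqP; split => z /=.
- by case.
- by move=> h; split => //; case: h.
- move=> [h1 h2]; split => //.
  have := h1; rewrite /Ueps /= => h4.
  case: (ltgtP (f1 z.1) (f2 z.1)) => // e; last first.
    by move: h4; rewrite e subrr normr0 => h4; move: heps h4; lra.
  by exfalso; apply: h2; split.
- by move=> h; split; [case: h|case=> _ ?; case: h => _; lra].
Qed.

Lemma hbnd (R : realType) (X : countType) (pmf : X * bool -> R)
  (hD : is_distribution pmf) (h : X * bool -> R) :
  (forall z, 0 <= h z <= 1) -> forall z, 0 <= h z * pmf z <= pmf z.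
Proof.
case: hD => p0 _ hh z; case/andP: (hh z) => h0 h1.
by rewrite mulr_ge0 //= ler_piMl.
Qed.

Lemma Bineq (R : realType) (X : countType) (pmf : X * bool -> R)
  (hD : is_distribution pmf) (S : set X) (f g : X -> R) (eps : R) :
  (forall x, 0 <= f x <= 1) -> (forall x, 0 <= g x <= 1) -> 0 < eps ->
  (forall x, S x -> g x + eps < f x) ->
  fine (\esum_(z in [set z : X * bool | S z.1]) (g z.1 * pmf z)%:E) + eps * mu pmf S
  <= fine (\esum_(z in [set z : X * bool | S z.1]) (f z.1 * pmf z)%:E).
Proof.
move=> hf hg he hS.
have bf := @hbnd _ _ _ hD (fun z => f z.1) (fun z => hf z.1).
have bg := @hbnd _ _ _ hD (fun z => g z.1) (fun z => hg z.1).
have p0 : forall z, 0 <= pmf z by case: hD.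
have Ff := @esum_fin _ _ _ hD [set z : X * bool | S z.1] _ bf.
have Fg := @esum_fin _ _ _ hD [set z : X * bool | S z.1] _ bg.
rewrite -lee_fin EFinD !fineK //.
have pE : forall i, (0 <= (pmf i)%:E)%E by move=> i; rewrite lee_fin.
rewrite EFinM mu_fin // -esumZ ?(ltW he) //.
rewrite -esumD; first last.
- by move=> i _; rewrite lee_fin mulr_ge0 // ltW.
- by move=> i _; case/andP: (bg i); rewrite lee_fin.
apply: le_esum => z Sz; rewrite -EFinM -EFinD lee_fin -mulrDl ler_wpM2r //.
exact/ltW/hS.
Qed.

Lemma mu_ge0 (R : realType) (X : countType) (pmf : X * bool -> R)
  (hD : is_distribution pmf) (S : set X) : 0 <= mu pmf S.
Proof.
rewrite -lee_fin mu_fin //; apply: esum_ge0 => z _; rewrite lee_fin.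
by case: hD.
Qed.

Lemma half (R : realType) (X : countType) (pmf : X * bool -> R)
  (hD : is_distribution pmf) (S : set X) (f g : X -> R) (eps alpha : R) :
  (forall x, 0 <= f x <= 1) -> (forall x, 0 <= g x <= 1) -> 0 < eps ->
  (forall x, S x -> g x + eps < f x) -> alpha <= 2 * mu pmf S ->
  exists h : X -> R, (h = f \/ h = g) /\ gap_term pmf S h >= alpha * eps ^+ 2 / 8.
Proof.
move=> hf hg he hS ha.
have hb := @Bineq _ _ _ hD S f g eps hf hg he hS.
have m0 := @mu_ge0 _ _ _ hD S.
have [b [hb' hineq]] := @core _ _ (fine (\esum_(z in [set z : X * bool | S z.1])
   ((z.2)%:R * pmf z)%:E)) _ _ _ _ he m0 ha hb.
case: hb' => hbe; subst b; [exists f | exists g]; split; auto.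
Qed.

Unset Implicit Arguments.

Theorem lemma2 (R : realType) (X : countType) (pmf : X * bool -> R)
  (hD : is_distribution pmf) (f1 f2 : X -> R)
  (hf1 : forall x, 0 <= f1 x <= 1) (hf2 : forall x, 0 <= f2 x <= 1)
  (eps alpha : R) (heps : 0 < eps)
  (halpha : mu pmf (Ueps eps f1 f2) = alpha) :
  exists S : set X, (S = Ugt eps f1 f2 \/ S = Ult eps f1 f2) /\
  exists f : X -> R, (f = f1 \/ f = f2) /\
    gap_term pmf S f >= alpha * eps ^+ 2 / 8.
Proof.
move: halpha; rewrite (@mu_split _ _ _ hD f1 f2 eps heps) => ha.
have [hGL|hGL] := lerP (mu pmf (Ult eps f1 f2)) (mu pmf (Ugt eps f1 f2)).
- exists (Ugt eps f1 f2); split; first by left.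
  have h2a : alpha <= 2 * mu pmf (Ugt eps f1 f2) by move: hGL; rewrite -ha; lra.
  have hS : forall x, Ugt eps f1 f2 x -> f2 x + eps < f1 x.
    move=> x [h1 h2]; move: h1; rewrite /Ueps /= gtr0_norm ?subr_gt0 //; lra.
  have [h [hh hi]] := @half _ _ _ hD (Ugt eps f1 f2) f1 f2 eps alpha hf1 hf2 heps hS h2a.
  by exists h; split => //; case: hh; auto.
- exists (Ult eps f1 f2); split; first by right.
  have h2a : alpha <= 2 * mu pmf (Ult eps f1 f2) by move: hGL; rewrite -ha; lra.
  have hS : forall x, Ult eps f1 f2 x -> f1 x + eps < f2 x.
    move=> x [h1 h2]; move: h1; rewrite /Ueps /= ltr0_norm ?subr_lt0 //; lra.
  have [h [hh hi]] := @half _ _ _ hD (Ult eps f1 f2) f2 f1 eps alpha hf2 hf1 heps hS h2a.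
  by exists h; split => //; case: hh; auto.
Qed.
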